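(* Let $n\ge 2d\ge 2$ be integers. There is a set $\mathcal{M}_d$ of $d$-matchings on $[n]$ of size $N:=|\mathcal{M}_d|\ge \binom{n}{d}/(4\cdot 2^d)$ and a set $\mathcal{S}_d$ of $d$-subsets of $[n]$ such that for every $S\in\mathcal{S}_d$ there is a unique matching $M\in\mathcal{M}_d$ which fully crosses $S$, and for every $M\in\mathcal{M}_d$ there is at least one $S\in\mathcal{S}_d$ which $M$ fully crosses. Moreover, for every $S\in\mathcal{S}_d$ there is a unique $M\in\mathcal{M}_d$ with $q_M(\mathbf{1}_S)\neq 0$, so the span of $\{q_M:M\in\mathcal{M}_d\}$ has dimension exactly $N$.
   Context: A $d$-matching on $[n]=\{1,\dots,n\}$ is a set of $d$ pairwise disjoint $2$-element subsets (edges) of $[n]$. For such $M$, $q_M(x_1,\dots,x_n)=\prod_{\{i,j\}\in M,\, i<j}(x_i-x_j)$. A $d$-matching $M$ fully crosses a $d$-subset $S\subseteq[n]$ if every edge of $M$ has exactly one endpoint in $S$. $\mathbf{1}_S\in\mathbb{R}^n$ is the indicator vector of $S$. *)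

(* Defs.v *)
From mathcomp Require Import all_boot all_order all_algebra.
From mathcomp Require Import mpoly.
Set Implicit Arguments. Unset Strict Implicit. Unset Printing Implicit Defensive.
Import Order.TTheory GRing.Theory Num.Theory.
Local Open Scope ring_scope.

(* Vertices [n] = {1..n} are represented by 'I_n = {0..n-1}.
   An edge is a 2-element subset of 'I_n; a matching is a set of edges. *)

Definition is_matching (n d : nat) (M : {set {set 'I_n}}) : bool :=
  [&& #|M| == d,
      [forall e in M, #|e| == 2] &
      [forall e1 in M, forall e2 in M, (e1 != e2) ==> [disjoint e1 & e2]]].

Definition fully_crosses (n : nat) (M : {set {set 'I_n}}) (S : {set 'I_n}) : bool :=
  [forall e in M, #|e :&: S| == 1].

Definition qM (R : ringType) (n : nat) (M : {set {set 'I_n}}) : {mpoly R[n]} :=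
  \prod_(e in M) \prod_(i in e) \prod_(j in e | (i < j)%N) ('X_i - 'X_j).

Definition indic (R : ringType) (n : nat) (S : {set 'I_n}) : 'I_n -> R :=
  fun i => (i \in S)%:R.

(* Main.v *)
Require Import Defs.
From mathcomp Require Import all_boot all_order all_algebra.
From mathcomp Require Import mpoly.
From mathcomp Require Import zify.
Import Order.TTheory GRing.Theory Num.Theory.
Set Implicit Arguments. Unset Strict Implicit. Unset Printing Implicit Defensive.
Section Indep.
Variable T : finType.
Variable adj : T -> T -> bool.
Variable D : nat.

Definition outs (V : {set T}) x := [set y in V | (y != x) && adj x y].
Definition ins (V : {set T}) x := [set y in V | (y != x) && adj y x].

Lemma card_sep (V : {set T}) (P : pred T) :
  #|[set y in V | P y]| = \sum_(y in V) (P y : nat).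
Proof.
rewrite -sum1_card big_mkcond [RHS]big_mkcond /=; apply: eq_bigr => y _.
by rewrite inE; case: (y \in V); case: (P y).
Qed.

Lemma sum_ins_outs (V : {set T}) :
  \sum_(x in V) #|ins V x| = \sum_(x in V) #|outs V x|.
Proof.
under eq_bigr do rewrite /ins card_sep.
under [RHS]eq_bigr do rewrite /outs card_sep.
rewrite exchange_big /=; apply: eq_bigr => x _; apply: eq_bigr => y _.
by rewrite eq_sym.
Qed.

Lemma indep_exists N (V : {set T}) : #|V| <= N ->
  (forall x, x \in V -> #|outs V x| <= D) ->
  exists F : {set T}, F \subset V /\
   (forall x y, x \in F -> y \in F -> x != y -> ~~ adj x y) /\
   #|V| <= D.*2.+1 * #|F|.
Proof.
elim: N V => [|N IH] V hV hout.
  exists set0; split; first exact: sub0set.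
  by split; [move=> x y; rewrite inE | rewrite cards0; lia].
have [V0|[v0 v0V]] := set_0Vmem V.
  exists set0; rewrite V0 cards0; split; first exact: sub0set.
  by split; [move=> x y; rewrite inE |].
have [v vV hv] : exists2 v, v \in V & #|outs V v| + #|ins V v| <= D.*2.
  case: (pickP [pred x in V | #|outs V x| + #|ins V x| <= D.*2]) => [v /andP[vV hv]|hall0]; first by exists v.
  have hall : forall x, x \in V -> ~~ (#|outs V x| + #|ins V x| <= D.*2).
    by move=> x xV; have := hall0 x; rewrite /= xV /= => ->.
  have : \sum_(x in V) (#|outs V x| + #|ins V x|) <= D.*2 * #|V|.
    rewrite big_split /= sum_ins_outs addnn -doubleMl.
    rewrite leq_double mulnC -sum_nat_const; exact: leq_sum.
  have : \sum_(x in V) D.*2.+1 <= \sum_(x in V) (#|outs V x| + #|ins V x|).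
    by apply: leq_sum => x xV; have := hall x xV; rewrite -ltnNge.
  rewrite sum_nat_const => h1 h2.
  have := leq_trans h1 h2; rewrite mulnC.
  have : 0 < #|V| by apply/card_gt0P; exists v0.
  nia.
set Nb := v |: (outs V v :|: ins V v).
set V' := V :\: Nb.
have vNb : v \in Nb by rewrite !inE eqxx.
have hV' : #|V'| <= N.
  have : #|V'| < #|V|.
    apply: proper_card; apply/properP; split; first exact: subsetDl.
    by exists v; rewrite // /V' inE vNb.
  lia.
have hout' : forall x, x \in V' -> #|outs V' x| <= D.
  move=> x xV'; apply: leq_trans (hout x _); last by move: xV'; rewrite inE => /andP[].
  apply: subset_leq_card; apply/subsetP => y; rewrite !inE.
  by case/andP => /andP[_ ->] ->.
have [F' [sF' [iF' cF']]] := IH V' hV' hout'.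
have vF' : v \notin F'.
  apply/negP => /(subsetP sF'); by rewrite inE vNb.
exists (v |: F'); split.
  by rewrite subUset sub1set vV (subset_trans sF') // subsetDl.
split.
  move=> x y; rewrite !inE => /orP[/eqP->|xF] /orP[/eqP->|yF]; rewrite ?eqxx //.
  - move=> vy; have := subsetP sF' y yF; rewrite !inE => /andP[+ yV].
    apply: contra => avy; by rewrite yV eq_sym vy avy !orbT.
  - move=> xv; have := subsetP sF' x xF; rewrite !inE => /andP[+ xV].
    apply: contra => axv; by rewrite xV xv axv !orbT.
  - exact: iF'.
rewrite cardsU1 vF' add1n mulnS.
have hNb : #|Nb| <= D.*2.+1.
  have h1 := (leq_card_setU (outs V v) (ins V v)).1.
  rewrite /Nb cardsU1; have := leq_b1 (v \notin outs V v :|: ins V v). lia.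
have : #|V| <= #|V'| + #|Nb|.
  rewrite /V' cardsD; have : #|V :&: Nb| <= #|Nb| by apply: subset_leq_card; exact: subsetIr.
  have : #|V :&: Nb| <= #|V| by apply: subset_leq_card; exact: subsetIl.
  lia.
lia.
Qed.
End Indep.

Section Partner.
Variable n : nat.
Implicit Types (S A : {set 'I_n}).

Definition partner S (x : 'I_n) : 'I_n := nth x (enum (~: S)) (index x (enum S)).
Definition Mof S : {set {set 'I_n}} := [set [set x; partner S x] | x in S].

Variable S : {set 'I_n}.
Hypothesis hS : #|S| <= #|~: S|.

Lemma partner_lt x : x \in S -> index x (enum S) < size (enum (~: S)).
Proof.
move=> xS; rewrite -cardE; apply: leq_trans hS.
by rewrite cardE index_mem mem_enum.
Qed.

Lemma partner_out x : x \in S -> partner S x \notin S.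
Proof.
move=> xS; have := mem_nth x (partner_lt xS).
by rewrite mem_enum inE.
Qed.

Lemma partner_neq x : x \in S -> x != partner S x.
Proof.
move=> xS; apply/eqP => h; have := partner_out xS; by rewrite -h xS.
Qed.

Lemma partner_inj : {in S &, injective (partner S)}.
Proof.
move=> x y xS yS; rewrite /partner.
rewrite (set_nth_default x y (partner_lt yS)).
move/eqP; rewrite nth_uniq ?partner_lt ?enum_uniq // => /eqP h.
have xe : x \in enum S by rewrite mem_enum.
have ye : y \in enum S by rewrite mem_enum.
by rewrite -(nth_index x xe) h nth_index.
Qed.

Lemma pair_cross (a b : 'I_n) A : a != b ->
  (#|[set a; b] :&: A| == 1) = ((a \in A) != (b \in A)).
Proof.
move=> ab.
have cE : #|[set a; b] :&: A| = (a \in A) + (b \in A).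
  case ha: (a \in A); case hb: (b \in A).
  - suff -> : [set a; b] :&: A = [set a; b] by rewrite cards2 ab.
    apply/setP => z; rewrite !inE; case: (eqVneq z a) => [->|] //=; rewrite ?ha //.
    by case: (eqVneq z b) => [->|] //=; rewrite hb.
  - suff -> : [set a; b] :&: A = [set a] by rewrite cards1.
    apply/setP => z; rewrite !inE; case: (eqVneq z a) => [->|] //=; rewrite ?ha //.
    by case: (eqVneq z b) => [->|] //=; rewrite hb.
  - suff -> : [set a; b] :&: A = [set b] by rewrite cards1.
    apply/setP => z; rewrite !inE; case: (eqVneq z a) => [->|] //=; rewrite ?ha ?(negbTE ab) //.
    by case: (eqVneq z b) => [->|] //=; rewrite hb.
  - suff -> : [set a; b] :&: A = set0 by rewrite cards0.
    apply/setP => z; rewrite !inE; case: (eqVneq z a) => [->|] //=; rewrite ?ha //.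
    by case: (eqVneq z b) => [->|] //=; rewrite hb.
by rewrite cE; case: (a \in A); case: (b \in A).
Qed.

Lemma Mof_edge e : e \in Mof S -> exists2 x, x \in S & e = [set x; partner S x].
Proof. by rewrite /Mof => /imsetP [x xS ->]; exists x. Qed.

Lemma pair_inj : {in S &, injective (fun x => [set x; partner S x])}.
Proof.
move=> x y xS yS /= h.
have : x \in [set y; partner S y] by rewrite -h !inE eqxx.
rewrite !inE => /orP[/eqP //|/eqP hx].
by have := partner_out yS; rewrite -hx xS.
Qed.

Lemma Mof_card : #|Mof S| = #|S|.
Proof. by rewrite card_in_imset //; exact: pair_inj. Qed.

Lemma Mof_matching : is_matching #|S| (Mof S).
Proof.
apply/and3P; split; first by rewrite Mof_card.
  apply/forall_inP => e /Mof_edge [x xS ->]; by rewrite cards2 partner_neq.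
apply/forall_inP => e1 /Mof_edge [x xS ->]; apply/forall_inP => e2 /Mof_edge [y yS ->].
apply/implyP => hne.
have xy : x != y by apply: contraNneq hne => ->.
have pxy : partner S x != partner S y by apply: contra xy => /eqP /partner_inj -> //.
have nx := partner_out xS; have ny := partner_out yS.
rewrite -setI_eq0; apply/eqP/setP => z; rewrite !inE; apply/negbTE/negP => /andP[] /orP[]/eqP -> /orP[]/eqP h.
- by rewrite h eqxx in xy.
- by move: ny; rewrite -h xS.
- by move: nx; rewrite h yS.
- by rewrite h eqxx in pxy.
Qed.

Lemma Mof_cross : fully_crosses (Mof S) S.
Proof.
apply/forall_inP => e /Mof_edge [x xS ->].
by rewrite pair_cross ?partner_neq // xS (negbTE (partner_out xS)).
Qed.

Lemma cross_edge S' x : fully_crosses (Mof S) S' -> x \in S ->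
  (x \in S') != (partner S x \in S').
Proof.
move=> /forall_inP h xS; rewrite -pair_cross ?partner_neq //; apply: h.
by apply/imsetP; exists x.
Qed.

Lemma crosser_eq S' : #|S'| = #|S| -> fully_crosses (Mof S) S' ->
  S' = (S :&: S') :|: partner S @: (S :\: S').
Proof.
move=> cS' hc; apply/esym/eqP; rewrite eqEcard; apply/andP; split.
  rewrite subUset subsetIr /=; apply/subsetP => z /imsetP [x]; rewrite inE => /andP[xS' xS] ->.
  by move: (cross_edge hc xS); rewrite (negbTE xS'); case: (_ \in S').
rewrite cardsU cS'.
have -> : S :&: S' :&: partner S @: (S :\: S') = set0.
  apply/setP => z; rewrite !inE; apply/negP => /andP[/andP[zS _]] /imsetP [x].
  rewrite inE => /andP[_ xS] hz; by have := partner_out xS; rewrite -hz zS.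
rewrite cards0 subn0 card_in_imset; last first.
  by move=> x y; rewrite !inE => /andP[_ xS] /andP[_ yS]; exact: partner_inj.
by rewrite cardsID.
Qed.

Lemma crossers_card :
  #|[set S' : {set 'I_n} | (#|S'| == #|S|) && fully_crosses (Mof S) S']| <= 2 ^ #|S|.
Proof.
set C := [set S' : {set 'I_n} | _].
rewrite -card_powerset -(@card_in_imset _ _ (fun S' => S :&: S')); last first.
  move=> S1 S2; rewrite !inE => /andP[/eqP c1 h1] /andP[/eqP c2 h2] /= e.
  have D : S :\: S1 = S :\: S2.
  apply/setP => z; have := congr1 (fun A => z \in A) e; rewrite /= !inE.
  by case: (z \in S) => /= h; rewrite ?h ?andbF.
  by rewrite (crosser_eq c1 h1) [RHS](crosser_eq c2 h2) e D.
apply: subset_leq_card; apply/subsetP => A /imsetP [S' _ ->].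
by rewrite inE subsetIl.
Qed.
End Partner.

Local Open Scope ring_scope.
Section Eval.
Variable R : realFieldType.
Variable n : nat.

Lemma ind_diff (S : {set 'I_n}) i j :
  (('X_i - 'X_j : {mpoly R[n]}).@[indic R S] != 0) = ((i \in S) != (j \in S)).
Proof.
rewrite mevalB !mevalXU /indic subr_eq0 eqr_nat.
by case: (i \in S); case: (j \in S).
Qed.

Lemma edge_eval (S e : {set 'I_n}) : #|e| = 2%N ->
  ((\prod_(i in e) \prod_(j in e | (i < j)%N) ('X_i - 'X_j) : {mpoly R[n]}).@[indic R S] != 0)
  = [forall i in e, forall j in e, (i != j) ==> ((i \in S) != (j \in S))].
Proof.
move=> /eqP /cards2P [a [b [ab ->]]].
rewrite rmorph_prod /=; apply/prodf_neq0/forall_inP.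
  move=> H i ie.
  apply/forall_inP => j je; apply/implyP => ij.
  case: (ltngtP i j) => [lij|lji|/val_inj eij]; last by rewrite eij eqxx in ij.
  - have := H i ie; rewrite rmorph_prod /= => /prodf_neq0 /(_ j).
    by rewrite je lij ind_diff => ->.
  - have := H j je; rewrite rmorph_prod /= => /prodf_neq0 /(_ i).
    by rewrite ie lji ind_diff eq_sym => ->.
move=> H i ie.
rewrite rmorph_prod /=; apply/prodf_neq0 => j /andP[je lij].
rewrite ind_diff; move: (H i ie) => /forall_inP /(_ j je) /implyP; apply.
by apply: contraTneq lij => ->; rewrite ltnn.
Qed.

Lemma edge_cond (S e : {set 'I_n}) : #|e| = 2%N ->
  [forall i in e, forall j in e, (i != j) ==> ((i \in S) != (j \in S))]
  = (#|e :&: S| == 1%N).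
Proof.
move=> /eqP /cards2P [a [b [ab ->]]]; rewrite pair_cross //.
apply/idP/idP.
  move=> /forall_inP /(_ a); rewrite !inE eqxx /= => /(_ isT) /forall_inP /(_ b).
  by rewrite !inE eqxx orbT ab /= => /(_ isT).
move=> h; apply/forall_inP => i; rewrite !inE => /orP[]/eqP->;
  apply/forall_inP => j; rewrite !inE => /orP[]/eqP->; rewrite ?eqxx //= ?h //.
- by rewrite ab.
- by rewrite eq_sym ab /= eq_sym.
Qed.

Lemma qM_eval (M : {set {set 'I_n}}) (S : {set 'I_n}) :
  [forall e in M, #|e| == 2%N] ->
  ((qM R M).@[indic R S] != 0) = fully_crosses M S.
Proof.
move=> /forall_inP h2; rewrite /qM rmorph_prod /=.
apply/prodf_neq0/forall_inP => H e eM; have c2 := eqP (h2 e eM).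
  by rewrite -edge_cond // -edge_eval //; exact: H.
by rewrite edge_eval // edge_cond //; exact: H.
Qed.
End Eval.

Unset Implicit Arguments.
Theorem lemma2 (R : realFieldType) (n d : nat) (hd : (1 <= d)%N) (hn : (2 * d <= n)%N) :
  exists (Md : {set {set {set 'I_n}}}) (Sd : {set {set 'I_n}}),
    (forall M, M \in Md -> is_matching d M) /\
    (forall S, S \in Sd -> #|S| = d) /\
    ('C(n, d) <= 4 * 2 ^ d * #|Md|)%N /\
    (forall S, S \in Sd -> exists! M, M \in Md /\ fully_crosses M S) /\
    (forall M, M \in Md -> exists S, S \in Sd /\ fully_crosses M S) /\
    (forall S, S \in Sd ->
       exists! M, M \in Md /\ (qM R M).@[indic R S] != 0) /\
    (forall c : {set {set 'I_n}} -> R,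
       \sum_(M in Md) c M *: qM R M = 0 -> forall M, M \in Md -> c M = 0).
Proof.
set V := [set S : {set 'I_n} | #|S| == d].
have hSC : forall S : {set 'I_n}, #|S| = d -> (#|S| <= #|~: S|)%N.
  move=> S cS; have := cardsC S; rewrite card_ord cS; lia.
pose adj := fun S S' : {set 'I_n} => fully_crosses (Mof S) S'.
have hout : forall S, S \in V -> (#|outs adj V S| <= 2 ^ d)%N.
  move=> S; rewrite inE => /eqP cS.
  rewrite -cS; apply: leq_trans (crossers_card (hSC S cS)).
  apply: subset_leq_card; apply/subsetP => S'; rewrite !inE => /andP[/eqP c' /andP[_ h]].
  by rewrite c' cS eqxx /=; exact: h.
have [F [sF [iF cF]]] := @indep_exists _ adj (2 ^ d) #|V| V (leqnn _) hout.
have cardF : forall S, S \in F -> #|S| = d.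
  by move=> S /(subsetP sF); rewrite inE => /eqP.
have crossF : forall S, S \in F -> fully_crosses (Mof S) S.
  by move=> S SF; apply: Mof_cross; apply: hSC; apply: cardF.
have matchF : forall S, S \in F -> is_matching d (Mof S).
  by move=> S SF; rewrite -{1}(cardF S SF); apply: Mof_matching; apply: hSC; apply: cardF.
have edgeF : forall S, S \in F -> [forall e in Mof S, #|e| == 2%N].
  by move=> S SF; case/and3P: (matchF S SF).
have Minj : {in F &, injective (@Mof n)}.
  move=> S1 S2 h1 h2 e; case: (eqVneq S1 S2) => // ne.
  by have := iF S1 S2 h1 h2 ne; rewrite /adj e crossF.
have uniqM : forall S S', S \in F -> S' \in F -> fully_crosses (Mof S') S -> S' = S.
  move=> S S' SF S'F hc; case: (eqVneq S' S) => // ne.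
  by have := iF S' S S'F SF ne; rewrite /adj hc.
exists ((@Mof n) @: F), F.
split; first by move=> M /imsetP [S SF ->]; apply: matchF.
split; first exact: cardF.
split.
  rewrite card_in_imset //.
  have -> : 'C(n, d) = #|V| by rewrite /V card_draws card_ord.
  apply: leq_trans cF _; rewrite -mul2n leq_mul2r; apply/orP; right.
  have := expn_gt0 2 d; lia.
split.
  move=> S SF; exists (Mof S); split; first by rewrite imset_f // crossF.
  by move=> M' [/imsetP [S' S'F ->] hc]; rewrite (uniqM S S').
split; first by move=> M /imsetP [S SF ->]; exists S; rewrite crossF.
split.
  move=> S SF; exists (Mof S); split; first by rewrite imset_f // qM_eval ?edgeF ?crossF.
  move=> M' [/imsetP [S' S'F ->]]; rewrite qM_eval ?edgeF // => hc.
  by rewrite (uniqM S S').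
move=> c hsum M /imsetP [S SF ->].
have := congr1 (meval (indic R S)) hsum.
rewrite raddf_sum (bigD1 (Mof S)) /= ?imset_f // big1 ?addr0; last first.
  move=> M' /andP [/imsetP [S' S'F ->] ne].
  have hnc : ~~ fully_crosses (Mof S') S.
    by apply: contra ne => hc; rewrite (uniqM S S').
  have z : (qM R (Mof S')).@[indic R S] = 0.
    by apply/eqP; apply: contraNT hnc; rewrite qM_eval ?edgeF.
  by rewrite mevalZ z mulr0.
rewrite mevalZ raddf0 => /eqP; rewrite mulf_eq0 => /orP [/eqP //|].
by move=> hz; have := crossF S SF; rewrite -(qM_eval R) ?edgeF // hz.
Qed.
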